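(* Let $f\ge 1$ and $k\ge 2$ be integers and let there be $n=kf+1$ validators, each maintaining a local DAG as described in the context (DAG-Rider setting). Let $p_i$ be a correct validator, let $w$ be a wave, and let $v\in DAG_i[\mathit{round}(w,1)]$ be the leader vertex of wave $w$. Suppose $p_i$ commits $v$, i.e. at least $(k-1)f+1$ vertices of $DAG_i[\mathit{round}(w,4)]$ have a path to $v$. Then for every validator $p_j$, every wave $w'>w$, and every leader vertex $v'$ of wave $w'$ with $v'\in DAG_j[\mathit{round}(w',1)]$ (the leader of wave $w'$ is the $\mathit{round}(w',1)$ vertex of an arbitrary validator, selected by a shared coin), there is a path from $v'$ to $v$.
   Context: Setting: $n=kf+1$ validators $p_1,\dots,p_n$, of which at most $f$ are Byzantine and the rest are correct (honest). All validators' local DAGs are subsets of one common set of vertices. Each vertex has a round number $r\ge 1$ and a source validator; for each validator and each round there is at most one vertex (no equivocation), so any two local DAGs that contain the vertex of a given validator for a given round contain the identical vertex, with identical edges. Every vertex of round $r\ge 2$ has edges to exactly $(k-1)f+1$ vertices of round $r-1$, all with distinct sources. Each validator $p_i$ has a local DAG $DAG_i$, a set of vertices closed under edges (if $u\in DAG_i$ then every vertex $u$ has an edge to is in $DAG_i$). $DAG_i[r]$ denotes the set of round-$r$ vertices of $DAG_i$. $\mathit{path}(u,v)$ (''a path from $u$ to $v$'') means there is a sequence of contiguous edges leading from $u$ to $v$. Rounds are grouped into waves of 4 rounds: $\mathit{round}(w,j)=4(w-1)+j$ for $j=1,2,3,4$ and waves $w\ge 1$. *)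

(* Defs.v *)
From mathcomp Require Import all_boot.
Set Implicit Arguments. Unset Strict Implicit. Unset Printing Implicit Defensive.

Definition round_of (w j : nat) : nat := 4 * (w - 1) + j.

Inductive dag_path (V : Type) (edge : V -> V -> bool) : V -> V -> Prop :=
| dp_edge u x : edge u x -> dag_path edge u x
| dp_step u x y : edge u x -> dag_path edge x y -> dag_path edge u y.

(* The common vertex set V, with round numbers, sources and edges, satisfies
   the DAG-Rider structural assumptions, with parameter q = (k-1)f+1. *)
Definition dag_setting (n q : nat) (V : eqType) (rnd : V -> nat)
  (src : V -> 'I_n) (edge : rel V) : Prop :=
  [/\
      forall u, 1 <= rnd u,
      forall u v, rnd u = rnd v -> src u = src v -> u = v,
      forall u x, edge u x -> rnd x + 1 = rnd u &
      forall u, 2 <= rnd u ->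
        exists s : seq V, [/\ size s = q, uniq (map src s) &
                              forall x, edge u x = (x \in s)]].

Definition local_dags_closed (n : nat) (V : eqType) (edge : rel V)
  (DAG : 'I_n -> pred V) : Prop :=
  forall i u x, DAG i u -> edge u x -> DAG i x.

Definition commits (n q : nat) (V : eqType) (rnd : V -> nat) (edge : rel V)
  (DAG : 'I_n -> pred V) (i : 'I_n) (w : nat) (v : V) : Prop :=
  exists s : seq V, [/\ uniq s, q <= size s &
    forall u, u \in s -> [/\ DAG i u, rnd u = round_of w 4 & dag_path edge u v]].

(* Main.v *)
Require Import Defs.
From mathcomp Require Import all_boot.
From mathcomp Require Import zify.

Theorem lemma1 (f k : nat) (hf : 1 <= f) (hk : 2 <= k)
  (V : eqType) (rnd : V -> nat) (src : V -> 'I_(k * f + 1)) (edge : rel V)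
  (DAG : 'I_(k * f + 1) -> pred V) (correct : pred 'I_(k * f + 1))
  (leader : nat -> 'I_(k * f + 1)) :
  dag_setting ((k - 1) * f + 1) rnd src edge ->
  local_dags_closed edge DAG ->
  #|[pred i | ~~ correct i]| <= f ->
  forall (i : 'I_(k * f + 1)) (w : nat) (v : V),
    correct i -> 1 <= w ->
    DAG i v -> rnd v = round_of w 1 -> src v = leader w ->
    commits ((k - 1) * f + 1) rnd edge DAG i w v ->
    forall (j : 'I_(k * f + 1)) (w' : nat) (v' : V),
      w < w' ->
      DAG j v' -> rnd v' = round_of w' 1 -> src v' = leader w' ->
      dag_path edge v' v.
Proof.
move=> [H1 Heq Hrnd Hdeg] _ _ i w v _ hw _ _ _ [s [us szs Hs]] j w' v' ww' _ rv' _.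
set q := (k - 1) * f + 1 in szs Hdeg.
set R := round_of w 4 in Hs.
have base : forall u, rnd u = R + 1 -> exists2 x, x \in s & edge u x.
  move=> u ru.
  have [|t [szt ut Ht]] := Hdeg u; first by rewrite ru /R /round_of; lia.
  have rt : forall x, x \in t -> rnd x = R.
    by move=> x xt; have := Hrnd u x; rewrite Ht xt ru => /(_ isT); lia.
  have us' : uniq (map src s).
    rewrite map_inj_in_uniq // => x y xs ys e.
    apply: Heq e; by have [_ -> _] := Hs x xs; have [_ -> _] := Hs y ys.
  have [hh|] := boolP (has (mem (map src s)) (map src t)).
    move/hasP: hh => [y /mapP [x2 x2t ->] /mapP [x1 x1s e]]; move: e => /esym e.
    exists x1 => //; rewrite Ht.
    suff -> : x1 = x2 by [].
    apply: Heq e; rewrite (rt x2 x2t); by have [_ -> _] := Hs x1 x1s.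
  move=> hn.
  have uc : uniq (map src s ++ map src t) by rewrite cat_uniq us' ut hn.
  have := max_card (mem (map src s ++ map src t)).
  rewrite (card_uniqP uc) card_ord size_cat !size_map szt.
  rewrite /q; move: szs; nia.
have main : forall m u, rnd u = R + 1 + m -> dag_path edge u v.
  elim=> [|m IH] u ru.
    have [x xs e] := base u (etrans ru (addn0 _)).
    have [_ _ p] := Hs x xs.
    exact: dp_step e p.
  have [|t [szt ut Ht]] := Hdeg u; first by rewrite ru /R /round_of; lia.
  case: t szt ut Ht => [|x t] szt _ Ht; first by move: szt; rewrite /q addn1.
  have e : edge u x by rewrite Ht mem_head.
  refine (dp_step e (IH x _)).
  have := Hrnd u x e; rewrite ru; lia.
apply: (main (4 * (w' - 1 - w))).
rewrite rv' /R /round_of; lia.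
Qed.
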